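(* Let $(a_n)_{n\ge1}$ be a relative convex real sequence which is bounded above. Then either $(a_n)_{n\ge1}$ is non-increasing, or every sequence $(t_n)_{n\ge1}\in T_a$ is convergent. More precisely, if some $(t_n)_{n\ge1}\in T_a$ satisfies $t_n\to\infty$, then $\Delta a_n\le0$ for all $n\ge1$.
   Context: For a real sequence $(x_i)$, $\Delta x_i=x_{i+1}-x_i$. ''Increasing'' means strictly increasing. For a real sequence $a=(a_i)_{i\ge1}$, $T_a$ denotes the set of increasing real sequences $(t_i)_{i\ge1}$ such that $(\Delta a_i/\Delta t_i)_{i\ge1}$ is non-decreasing; $a$ is relative convex if $T_a\neq\emptyset$. *)

(* Defs.v *)
(* concrete reals R. Sequences (x_i)_{i>=1} are represented as
   functions nat -> R with index shifted by one (x 0 is the paper's x_1). *)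
From Stdlib Require Import Reals.
Open Scope R_scope.

Definition delta (x : nat -> R) (i : nat) : R := x (S i) - x i.

Definition increasing_seq (t : nat -> R) : Prop := forall i, t i < t (S i).

Definition in_T (a t : nat -> R) : Prop :=
  increasing_seq t /\
  forall i, delta a i / delta t i <= delta a (S i) / delta t (S i).

Definition relative_convex (a : nat -> R) : Prop := exists t, in_T a t.

Definition bounded_above (a : nat -> R) : Prop := exists M, forall n, a n <= M.

Definition nonincreasing_seq (a : nat -> R) : Prop := forall i, a (S i) <= a i.

Definition convergent (t : nat -> R) : Prop := exists l, Un_cv t l.

(* Main.v *)
Require Import Defs.
From Stdlib Require Import Reals Lra Lia.
Open Scope R_scope.

Lemma ratio_mono (a t : nat -> R) : in_T a t -> forall k m,
  delta a k / delta t k <= delta a (k + m)%nat / delta t (k + m)%nat.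
Proof.
  intros [_ H] k m; induction m.
  - rewrite Nat.add_0_r; lra.
  - replace (k + S m)%nat with (S (k + m)) by lia. specialize (H (k+m)%nat). lra.
Qed.

Lemma t_mono (t : nat -> R) : increasing_seq t -> forall k m, t k <= t (k + m)%nat.
Proof.
  intros H k m; induction m.
  - rewrite Nat.add_0_r; lra.
  - replace (k + S m)%nat with (S (k + m)) by lia. specialize (H (k+m)%nat). lra.
Qed.

Lemma chain (a t : nat -> R) : in_T a t -> forall k m,
  a (k + m)%nat - a k >= delta a k / delta t k * (t (k + m)%nat - t k).
Proof.
  intros HT k m. set (r := delta a k / delta t k).
  induction m.
  - rewrite Nat.add_0_r. lra.
  - replace (k + S m)%nat with (S (k + m)) by lia.
    pose proof (ratio_mono a t HT k m) as Hr. fold r in Hr.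
    destruct HT as [Hinc _].
    assert (Hd : delta t (k+m)%nat > 0) by (unfold delta; specialize (Hinc (k+m)%nat); lra).
    assert (E : delta a (k+m)%nat = delta a (k+m)%nat / delta t (k+m)%nat * delta t (k+m)%nat)
      by (field; lra).
    assert (delta a (k+m)%nat / delta t (k+m)%nat * delta t (k+m)%nat >= r * delta t (k+m)%nat)
      by (apply Rle_ge, Rmult_le_compat_r; lra).
    unfold delta in *. lra.
Qed.

Lemma t_bounded (a t : nat -> R) (M : R) : in_T a t -> (forall n, a n <= M) ->
  forall k, delta a k > 0 -> exists B, forall n, t n <= B.
Proof.
  intros HT HM k Hk.
  pose proof HT as [Hinc _].
  assert (Hdt : delta t k > 0) by (unfold delta; specialize (Hinc k); lra).
  set (r := delta a k / delta t k).
  assert (Hr : r > 0) by (unfold r; apply Rdiv_lt_0_compat; lra).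
  exists (t k + (M - a k) / r). intro n.
  destruct (Nat.le_gt_cases k n) as [H|H].
  - replace n with (k + (n - k))%nat by lia.
    pose proof (chain a t HT k (n - k)) as C. fold r in C.
    pose proof (HM (k + (n-k))%nat).
    assert (r * (t (k + (n - k))%nat - t k) <= M - a k) by lra.
    assert (t (k + (n - k))%nat - t k <= (M - a k) / r).
    { apply (Rmult_le_reg_l r); [lra|]. field_simplify; lra. }
    lra.
  - pose proof (t_mono t Hinc n (k - n)) as Hm. replace (n + (k - n))%nat with k in Hm by lia.
    assert (0 <= (M - a k) / r).
    { apply Rmult_le_pos; [pose proof (HM k); lra | left; apply Rinv_0_lt_compat; lra]. }
    lra.
Qed.

Theorem proposition3p4 (a : nat -> R) :
  relative_convex a -> bounded_above a ->
  (nonincreasing_seq a \/ (forall t, in_T a t -> convergent t)) /\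
  ((exists t, in_T a t /\ cv_infty t) -> forall i, delta a i <= 0).
Proof.
  intros _ [M HM]. split.
  - destruct (Classical_Prop.classic (forall i, delta a i <= 0)) as [H|H].
    + left. intro i. specialize (H i). unfold delta in H. lra.
    + right. apply Classical_Pred_Type.not_all_ex_not in H. destruct H as [k Hk].
      intros t HT. destruct (t_bounded a t M HT HM k ltac:(lra)) as [B HB].
      assert (Hg : Un_growing t) by (intro n; destruct HT as [Hi _]; left; apply Hi).
      assert (Hu : has_ub t) by (exists B; intros x [n ->]; apply HB).
      destruct (growing_cv t Hg Hu) as [l Hl]. exists l; exact Hl.
  - intros [t [HT Hc]] i. destruct (Rle_lt_dec (delta a i) 0) as [H|H]; [exact H|].
    destruct (t_bounded a t M HT HM i H) as [B HB].
    destruct (Hc B) as [N HN]. specialize (HN N (le_n N)). specialize (HB N). lra.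
Qed.
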